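(* Let $S$ be a connected graded reduced affine monoid. Then the graded catenary degree $c_{\mathrm{gr}}(S)$ is the minimal non-negative integer $d$ such that there exists a subset $\Lambda\subset M\times M$ generating the semigroup congruence $\sim_S$ with $|\alpha|_{\mathrm{gr}}\le d$ and $|\gamma|_{\mathrm{gr}}\le d$ for all $(x^{\alpha},x^{\gamma})\in\Lambda$.
   Context: A monoid is a commutative cancellative semigroup with identity; affine means a finitely generated submonoid of a finitely generated free abelian group; reduced means the identity is the only unit. $S$ is graded if $S$ is the disjoint union of subsets $S_d$, $d\in\mathbb{N}_0$, with $S_dS_e\subseteq S_{d+e}$; write $|s|=d$ for $s\in S_d$; connected graded means $S_0=\{1\}$. $\mathcal{A}(S)$ is the finite set of atoms; $a^{\alpha}=\prod_a a^{\alpha(a)}$ for $\alpha\in\mathbb{N}_0^{\mathcal{A}(S)}$. $M$ is the free commutative monoid on indeterminates $x_a$ ($a\in\mathcal{A}(S)$), with elements $x^{\alpha}$, and $\sim_S$ is the congruence on $M$ with $x^{\alpha}\sim_S x^{\gamma}$ iff $a^{\alpha}=a^{\gamma}$. Set $|\alpha|_{\mathrm{gr}}=\sum_a\alpha(a)|a|$, $\gcd(\alpha,\gamma)(a)=\min\{\alpha(a),\gamma(a)\}$, and $d_{\mathrm{gr}}(\alpha,\gamma)=\max\{|\alpha-\gcd(\alpha,\gamma)|_{\mathrm{gr}},|\gamma-\gcd(\alpha,\gamma)|_{\mathrm{gr}}\}$. The graded catenary degree $c_{\mathrm{gr}}(S)$ is the minimal $d$ such that whenever $a^{\alpha}=a^{\gamma}$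 there is a sequence $\alpha=\alpha^{(0)},\dots,\alpha^{(k)}=\gamma$ in $\mathbb{N}_0^{\mathcal{A}(S)}$ with $a^{\alpha^{(j)}}=a^{\alpha^{(j+1)}}$ and $d_{\mathrm{gr}}(\alpha^{(j)},\alpha^{(j+1)})\le d$ for all $j$. *)

(* Defs.v *)
From HB Require Import structures.
From mathcomp Require Import all_boot all_order all_algebra.
From mathcomp Require Import finmap multiset.
Set Implicit Arguments. Unset Strict Implicit. Unset Printing Implicit Defensive.
Import Order.TTheory GRing.Theory Num.Theory.

Local Open Scope ring_scope.

Notation vec n := 'rV[int]_n.

Definition inS (n : nat) (gens : seq (vec n)) (v : vec n) : Prop :=
  exists c : 'I_(size gens) -> nat,
    v = \sum_(i < size gens) (nth 0 gens i) *+ c i.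

Definition is_unitS n (gens : seq (vec n)) (u : vec n) : Prop :=
  inS gens u /\ exists w, inS gens w /\ u + w = 0.

Definition reduced n (gens : seq (vec n)) : Prop :=
  forall u, is_unitS gens u -> u = 0.

(* graded: S = disjoint union of S_d = deg^-1(d), with S_d + S_e in S_{d+e} *)
Definition graded n (gens : seq (vec n)) (deg : vec n -> nat) : Prop :=
  forall s t, inS gens s -> inS gens t -> deg (s + t) = (deg s + deg t)%N.

Definition connected n (gens : seq (vec n)) (deg : vec n -> nat) : Prop :=
  forall s, inS gens s -> deg s = 0%N -> s = 0.

Definition is_atom n (gens : seq (vec n)) (a : vec n) : Prop :=
  [/\ inS gens a, ~ is_unitS gens a &
      forall b c, inS gens b -> inS gens c -> a = b + c ->
        is_unitS gens b \/ is_unitS gens c].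

(* Elements x^alpha of the free commutative monoid M on the atoms,
   i.e. alpha in N_0^{A(S)}, represented as finite multisets of atoms. *)
Definition inM n (gens : seq (vec n)) (alpha : {mset vec n}%mset) : Prop :=
  forall v, v \in enum_mset alpha -> is_atom gens v.

Definition evalM n (alpha : {mset vec n}%mset) : vec n :=
  \sum_(v <- enum_mset alpha) v.

Definition gdeg n (deg : vec n -> nat) (alpha : {mset vec n}%mset) : nat :=
  (\sum_(v <- enum_mset alpha) deg v)%N.

Definition dgr n (deg : vec n -> nat) (alpha gamma : {mset vec n}%mset) : nat :=
  maxn (gdeg deg (msetB alpha (msetI alpha gamma)))
       (gdeg deg (msetB gamma (msetI alpha gamma))).

Definition simS n (gens : seq (vec n)) (alpha gamma : {mset vec n}%mset) : Prop :=
  [/\ inM gens alpha, inM gens gamma & evalM alpha = evalM gamma].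

Definition gr_catenary_bound n (gens : seq (vec n)) (deg : vec n -> nat)
    (d : nat) : Prop :=
  forall alpha gamma, simS gens alpha gamma ->
    exists (k : nat) (f : nat -> {mset vec n}%mset),
      [/\ f 0%N = alpha, f k = gamma &
          forall j, (j < k)%N ->
            [/\ inM gens (f j), inM gens (f j.+1),
                evalM (f j) = evalM (f j.+1) & (dgr deg (f j) (f j.+1) <= d)%N]].

Definition congruenceM n (gens : seq (vec n))
    (C : {mset vec n}%mset -> {mset vec n}%mset -> Prop) : Prop :=
  [/\ (forall a b, C a b -> inM gens a /\ inM gens b),
      (forall a, inM gens a -> C a a),
      (forall a b, C a b -> C b a),
      (forall a b c, C a b -> C b c -> C a c) &
      (forall a b c, C a b -> inM gens c -> C (msetD a c) (msetD b c))].

Definition cong_gen n (gens : seq (vec n))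
    (Lam : {mset vec n}%mset -> {mset vec n}%mset -> Prop)
    (a b : {mset vec n}%mset) : Prop :=
  forall C, congruenceM gens C -> (forall p q, Lam p q -> C p q) -> C a b.

Definition generates_simS n (gens : seq (vec n))
    (Lam : {mset vec n}%mset -> {mset vec n}%mset -> Prop) : Prop :=
  (forall p q, Lam p q -> inM gens p /\ inM gens q) /\
  (forall a b, simS gens a b <-> cong_gen gens Lam a b).

Definition gen_bound n (gens : seq (vec n)) (deg : vec n -> nat) (d : nat) : Prop :=
  exists Lam : {mset vec n}%mset -> {mset vec n}%mset -> Prop,
    generates_simS gens Lam /\
    forall p q, Lam p q -> (gdeg deg p <= d)%N /\ (gdeg deg q <= d)%N.

Definition is_min_nat (P : nat -> Prop) (d : nat) : Prop :=
  P d /\ forall e, P e -> (d <= e)%N.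

(* Main.v *)
Require Import Defs.
From mathcomp Require Import all_boot all_order all_algebra.
From mathcomp Require Import finmap multiset.
Set Implicit Arguments. Unset Strict Implicit. Unset Printing Implicit Defensive.
Import GRing.Theory.
Local Open Scope ring_scope.

Section Aux.
Variable n : nat.
Implicit Types (A B C : {mset 'rV[int]_n}%mset).

Lemma perm_msetD A B : perm_eq (enum_mset (msetD A B)) (enum_mset A ++ enum_mset B).
Proof.
rewrite /perm_eq; apply/allP => x _ /=.
by rewrite count_cat !count_mem_mset msetE2.
Qed.

Lemma evalM_D A B : evalM (msetD A B) = evalM A + evalM B.
Proof. by rewrite /evalM (perm_big _ (perm_msetD A B)) big_cat. Qed.

Lemma gdeg_D deg A B : gdeg deg (msetD A B) = (gdeg deg A + gdeg deg B)%N.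
Proof. by rewrite /gdeg (perm_big _ (perm_msetD A B)) big_cat. Qed.

Lemma inM_D gens A B : inM gens (msetD A B) <-> inM gens A /\ inM gens B.
Proof.
rewrite /inM; split.
  move=> H; split=> v Hv; apply: H; by rewrite (perm_mem (perm_msetD A B)) mem_cat Hv ?orbT.
move=> [H1 H2] v; rewrite (perm_mem (perm_msetD A B)) mem_cat => /orP[]; auto.
Qed.

Lemma inM_sub gens A B : msubset A B -> inM gens B -> inM gens A.
Proof. move=> /msubset_subset Hs H v Hv; apply: H; exact: Hs. Qed.

Lemma gdeg_sub deg A B : msubset A B -> (gdeg deg A <= gdeg deg B)%N.
Proof. move=> Hs; rewrite -(msetBDK Hs) gdeg_D; exact: leq_addl. Qed.

Lemma dgr_shift deg A B C : dgr deg (msetD A C) (msetD B C) = dgr deg A B.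
Proof. by rewrite /dgr -msetDIl !msetBDr. Qed.

Lemma dgr_sym deg A B : dgr deg A B = dgr deg B A.
Proof. by rewrite /dgr msetIC maxnC. Qed.

Lemma dgr_le deg A B : (dgr deg A B <= maxn (gdeg deg A) (gdeg deg B))%N.
Proof.
rewrite /dgr geq_max !leq_max (gdeg_sub deg (msubsetDl _ _)).
by rewrite (gdeg_sub deg (msubsetDl B _)) orbT.
Qed.

Variable gens : seq 'rV[int]_n.
Variable deg : 'rV[int]_n -> nat.
Variable d : nat.

Definition step A B :=
  [/\ inM gens A, inM gens B, evalM A = evalM B & (dgr deg A B <= d)%N].

Inductive ch : {mset 'rV[int]_n}%mset -> {mset 'rV[int]_n}%mset -> Prop :=
| ch0 a : ch a a
| chS a b c : step a b -> ch b c -> ch a c.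

Lemma ch_trans a b c : ch a b -> ch b c -> ch a c.
Proof. elim=> // x y z Hs _ IH H; exact: chS Hs (IH H). Qed.

Lemma step_sym a b : step a b -> step b a.
Proof. by case=> *; split=> //; rewrite dgr_sym. Qed.

Lemma ch_sym a b : ch a b -> ch b a.
Proof.
elim=> [x|x y z Hs _ IH]; first exact: ch0.
apply: ch_trans IH _; apply: chS (step_sym Hs) (ch0 _).
Qed.

Lemma ch_shift a b c : ch a b -> inM gens c -> ch (msetD a c) (msetD b c).
Proof.
move=> H Hc; elim: H => [x|x y z [H1 H2 H3 H4] _ IH]; first exact: ch0.
apply: chS IH; split; try by apply/inM_D.
  by rewrite !evalM_D H3.
by rewrite dgr_shift.
Qed.

Lemma ch_fun a b : ch a b <->
    exists (k : nat) (f : nat -> {mset 'rV[int]_n}%mset),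
      [/\ f 0%N = a, f k = b &
          forall j, (j < k)%N ->
            [/\ inM gens (f j), inM gens (f j.+1),
                evalM (f j) = evalM (f j.+1) & (dgr deg (f j) (f j.+1) <= d)%N]].
Proof.
split.
  elim=> [x|x y z Hs _ [k [f [H0 Hk Hj]]]].
    by exists 0%N, (fun _ => x); split.
  exists k.+1, (fun j => if j is j'.+1 then f j' else x); split=> //.
  case=> [|j] /=; last by rewrite ltnS; apply: Hj.
  by rewrite H0.
move=> [k [f [H0 Hk Hj]]]; elim: k a f H0 Hk Hj => [|k IH] a f H0 Hk Hj.
  by rewrite -H0 -Hk; apply: ch0.
apply: (@chS _ (f 1%N)).
  by rewrite -H0; apply: Hj.
apply: (IH _ (fun j => f j.+1)) => // j Hjk; apply: Hj; by rewrite ltnS.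
Qed.

End Aux.

Theorem proposition3p2 (n : nat) (gens : seq 'rV[int]_n)
    (deg : 'rV[int]_n -> nat) :
  reduced gens -> graded gens deg -> connected gens deg ->
  forall d : nat,
    is_min_nat (gr_catenary_bound gens deg) d <->
    is_min_nat (gen_bound gens deg) d.
Proof.
move=> _ _ _.
have simS_cong : congruenceM gens (simS gens).
  split.
  - by move=> a b [].
  - by move=> a Ha; split.
  - by move=> a b [? ? ?]; split.
  - by move=> a b c [? ? E1] [? ? E2]; split=> //; rewrite E1.
  - move=> a b c [? ? E] Hc; split; try by apply/inM_D.
    by rewrite !evalM_D E.
have equiv : forall e, gr_catenary_bound gens deg e <-> gen_bound gens deg e.
  move=> e; split.
    move=> Hcat.
    exists (fun p q => simS gens p q /\ (gdeg deg p <= e)%N /\ (gdeg deg q <= e)%N).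
    split; last by move=> p q [_ H].
    split; first by move=> p q [[]].
    move=> a b; split.
      move=> Hab C HC HL.
      have Hch : ch gens deg e a b.
        by apply/ch_fun; apply: Hcat.
      case: Hab => Ha _ _.
      case: HC => HC1 HC2 HC3 HC4 HC5.
      elim: Hch Ha => [x Hx|x y z [H1 H2 H3 H4] _ IH Hx]; first exact: HC2.
      apply: (HC4 _ y); last exact: IH.
      set g := msetI x y.
      have Sx : msubset g x by apply: msubsetIl.
      have Sy : msubset g y by apply: msubsetIr.
      rewrite -(msetBDK Sx) -(msetBDK Sy).
      apply: HC5; last exact: (inM_sub Sx).
      apply: HL; split; [split|split].
      - exact: (inM_sub (msubsetDl _ _)).
      - exact: (inM_sub (msubsetDl _ _)).
      - apply: (@addIr _ (evalM g)); rewrite -!evalM_D !msetBDK //.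
      - apply: leq_trans H4; rewrite /dgr leq_max; by rewrite leqnn.
      - apply: leq_trans H4; rewrite /dgr leq_max; by rewrite leqnn orbT.
    by move=> H; apply: H => // p q [].
  move=> [Lam [[HL1 HL2] Hdeg]] a b /HL2 Hab.
  apply/(ch_fun gens deg e).
  have : inM gens a /\ inM gens b /\ ch gens deg e a b.
    apply: (Hab (fun x y => inM gens x /\ inM gens y /\ ch gens deg e x y)).
    - split.
      + by move=> x y [? []].
      + by move=> x Hx; split=> //; split=> //; apply: ch0.
      + by move=> x y [? [? H]]; split=> //; split=> //; apply: ch_sym.
      + move=> x y z [? [? H1]] [? [? H2]]; split=> //; split=> //.
        exact: ch_trans H1 H2.
      + move=> x y z [? [? H]] Hz; split; [|split]; try by apply/inM_D.
        exact: ch_shift.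
    - move=> p q Hpq; have [Hp Hq] := HL1 p q Hpq.
      split=> //; split=> //.
      apply: chS (ch0 _ _ _ _); split=> //.
        have : simS gens p q by apply/HL2 => C _ HC; apply: HC.
        by case.
      apply: leq_trans (dgr_le deg p q) _; rewrite geq_max.
      by case: (Hdeg p q Hpq) => -> ->.
  by case=> _ [].
move=> d; rewrite /is_min_nat; split.
  by move=> [H1 H2]; split; [apply/equiv | move=> e /equiv; apply: H2].
by move=> [H1 H2]; split; [apply/equiv | move=> e /equiv; apply: H2].
Qed.
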